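(* For $s\in\mathbb{R}$ let $\mathcal{H}_s=\{h(z)=\sum_{n\ge0}a_nz^n:\ \|h\|_s^2=\sum_{n\ge0}(1+n)^{-s}|a_n|^2<\infty\}$. The embedding dimension of $\mathcal{H}_0$ is $1$, and for every $s<0$ the embedding dimension of $\mathcal{H}_s$ is $\infty$.
   Context: $\mathcal{H}_s$ is a reproducing kernel Hilbert space of analytic functions on the unit disc $\mathbb{D}$ with kernel $k(z,w)=\sum_{n\ge0}(1+n)^s(z\bar w)^n$; for $s\le0$ it is an irreducible complete Pick space. The embedding dimension of an RKHS on $\mathbb{D}$ with kernel $k$ is the smallest $d\in\mathbb{N}\cup\{\infty\}$ for which there exist a map $b:\mathbb{D}\to\mathbb{B}_d$ (open unit ball of $\mathbb{C}^d$, with $\mathbb{C}^\infty=\ell^2(\mathbb{N})$) and a nowhere-vanishing $\delta:\mathbb{D}\to\mathbb{C}$ with $k(z,w)=\frac{\delta(z)\overline{\delta(w)}}{1-\langle b(z),b(w)\rangle}$. *)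

(* Defs.v *)
From Stdlib Require Import Reals.
From Coquelicot Require Import Coquelicot.
Open Scope R_scope.

Definition in_disc (z : C) : Prop := Cmod z < 1.

Definition CSeries (a : nat -> C) : C :=
  (Series (fun n => Re (a n)), Series (fun n => Im (a n))).

(* Reproducing kernel of H_s:  k_s(z,w) = sum_{n>=0} (1+n)^s (z conj w)^n. *)
Definition kern (s : R) (z w : C) : C :=
  CSeries (fun n => Cmult (RtoC (Rpower (1 + INR n) s)) (Cpow (Cmult z (Cconj w)) n)).

(* Points of the open unit ball B_d.  C^d (d : nat) is identified with the
   sequences x : nat -> C vanishing from index d on; C^oo = l^2(N) is the
   space of square-summable sequences (d = None). *)
Definition in_ball (d : option nat) (x : nat -> C) : Prop :=
  (match d with
   | Some m => forall n, (m <= n)%nat -> x n = RtoC 0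
   | None => True
   end) /\
  exists r : R, is_series (fun n => Cmod (x n) ^ 2) r /\ r < 1.

Definition cinner (x y : nat -> C) : C :=
  CSeries (fun n => Cmult (x n) (Cconj (y n))).

Definition has_embedding (s : R) (d : option nat) : Prop :=
  exists (b : C -> nat -> C) (delta : C -> C),
    (forall z, in_disc z -> in_ball d (b z)) /\
    (forall z, in_disc z -> delta z <> RtoC 0) /\
    (forall z w, in_disc z -> in_disc w ->
       kern s z w = Cdiv (Cmult (delta z) (Cconj (delta w)))
                         (Cminus (RtoC 1) (cinner (b z) (b w)))).

(* The embedding dimension of H_s equals e (Some d = finite d, None = infinity):
   the least element of N u {oo} for which an embedding exists. *)
Definition emb_dim_is (s : R) (e : option nat) : Prop :=
  match e with
  | Some d => has_embedding s (Some d) /\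
              forall d', (d' < d)%nat -> ~ has_embedding s (Some d')
  | None => has_embedding s None /\ forall d, ~ has_embedding s (Some d)
  end.

(* Main.v *)
Require Import Defs.
From Stdlib Require Import Reals.
From Coquelicot Require Import Coquelicot.
Open Scope R_scope.
From Stdlib Require Import Lra Lia Psatz Classical ZArith.
Open Scope R_scope.

Definition a (s : R) (n : nat) : R := Rpower (1 + INR n) s.

Fixpoint cv (s : R) (n : nat) : nat -> R :=
  match n with
  | O => fun _ => 0
  | S m => fun k => if Nat.eqb k (S m)
                    then a s (S m) - sum_f_R0 (fun j => cv s m j * a s (S m - j)) m
                    else cv s m k
  end.

Definition c (s : R) (n : nat) : R := cv s n n.

Lemma cv_stable s : forall m k, (k <= m)%nat -> cv s m k = c s k.
Proof.
  induction m as [|m IH]; intros k Hk.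
  - assert (k = 0%nat) by lia; subst; reflexivity.
  - destruct (Nat.eq_dec k (S m)) as [->|Hne].
    + reflexivity.
    + simpl. rewrite (proj2 (Nat.eqb_neq k (S m)) Hne). apply IH; lia.
Qed.

Lemma c0 s : c s 0 = 0.
Proof. reflexivity. Qed.

Lemma c_rec s m : c s (S m) = a s (S m) - sum_f_R0 (fun j => c s j * a s (S m - j)) m.
Proof.
  unfold c at 1. simpl. rewrite Nat.eqb_refl. f_equal.
  apply sum_eq. intros i Hi. rewrite cv_stable by lia. reflexivity.
Qed.

Lemma Rpower_1_l s : Rpower 1 s = 1.
Proof. unfold Rpower. rewrite ln_1, Rmult_0_r. apply exp_0. Qed.

Lemma a0 s : a s 0 = 1.
Proof. unfold a. simpl. replace (1+0) with 1 by ring. apply Rpower_1_l. Qed.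

Lemma a_pos s n : 0 < a s n.
Proof. unfold a, Rpower. apply exp_pos. Qed.

Lemma a_rec s m : a s (S m) = sum_f_R0 (fun j => c s j * a s (S m - j)) (S m).
Proof.
  simpl sum_f_R0 at 1. rewrite Nat.sub_diag, a0, c_rec.
  simpl sum_f_R0. ring.
Qed.

Lemma Rpower_anti x y s : 0 < x -> x <= y -> s <= 0 -> Rpower y s <= Rpower x s.
Proof.
  intros Hx Hxy Hs. unfold Rpower.
  assert (ln x <= ln y) by (apply ln_le; lra).
  destruct (Rle_lt_or_eq_dec _ _ (Rmult_le_compat_neg_l s _ _ Hs H)) as [Hl|He].
  - left. apply exp_increasing. lra.
  - rewrite He. lra.
Qed.

Lemma Rpower_santi x y s : 0 < x -> x < y -> s < 0 -> Rpower y s < Rpower x s.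
Proof.
  intros Hx Hxy Hs. unfold Rpower.
  assert (ln x < ln y) by (apply ln_increasing; lra).
  apply exp_increasing. nra.
Qed.

Lemma INR1_pos n : 0 < 1 + INR n.
Proof. pose proof (pos_INR n). lra. Qed.

Lemma a_le1 s n : s <= 0 -> a s n <= 1.
Proof.
  intro Hs. unfold a. pose proof (Rpower_1_l s) as E.
  pose proof (Rpower_anti 1 (1 + INR n) s ltac:(lra) ltac:(pose proof (pos_INR n); lra) Hs).
  lra.
Qed.

Lemma a_anti s i j : s <= 0 -> (i <= j)%nat -> a s j <= a s i.
Proof.
  intros Hs Hij. unfold a. apply Rpower_anti; [apply INR1_pos| |exact Hs].
  apply le_INR in Hij. lra.
Qed.

Lemma a_santi s n : s < 0 -> a s (S n) < a s n.
Proof.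
  intros Hs. unfold a. apply Rpower_santi; [apply INR1_pos| |exact Hs].
  rewrite S_INR. lra.
Qed.

Lemma a_logconv s m n : s <= 0 -> (m <= n)%nat ->
  a s (S m) * a s n <= a s (S n) * a s m.
Proof.
  intros Hs Hmn. unfold a.
  rewrite !Rpower_mult_distr by apply INR1_pos.
  apply Rpower_anti; [ apply Rmult_lt_0_compat; apply INR1_pos | | exact Hs].
  rewrite !S_INR. apply le_INR in Hmn. pose proof (pos_INR m). nra.
Qed.

Lemma sum_S (f : nat -> R) n : sum_f_R0 f (S n) = sum_f_R0 f n + f (S n).
Proof. reflexivity. Qed.

Lemma sum_nonneg (f : nat -> R) N : (forall i, (i <= N)%nat -> 0 <= f i) -> 0 <= sum_f_R0 f N.
Proof.
  induction N as [|N IH]; intro H; simpl.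
  - apply H; lia.
  - assert (0 <= sum_f_R0 f N) by (apply IH; intros; apply H; lia).
    assert (0 <= f (S N)) by (apply H; lia). lra.
Qed.

Lemma c_nonneg s : s <= 0 -> forall n, 0 <= c s n.
Proof.
  intros Hs n. induction n as [n IH] using (well_founded_induction Wf_nat.lt_wf).
  destruct n as [|m]; [rewrite c0; lra|].
  destruct m as [|m'].
  - rewrite c_rec. simpl. rewrite c0. pose proof (a_pos s 1). lra.
  - set (m := S m') in *.
    assert (E : a s m = sum_f_R0 (fun j => c s j * a s (m - j)) m) by apply a_rec.
    assert (Hk : c s (S m) * a s m =
      sum_f_R0 (fun k => c s k * (a s (S m) * a s (m - k) - a s (S m - k) * a s m)) m).
    { rewrite c_rec. rewrite Rmult_minus_distr_r.
      replace (a s (S m) * a s m) with (a s (S m) * sum_f_R0 (fun j => c s j * a s (m - j)) m)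
        by (rewrite <- E; reflexivity).
      rewrite scal_sum.
      rewrite (Rmult_comm _ (a s m)).
      rewrite scal_sum. rewrite <- minus_sum.
      apply sum_eq. intros i Hi. ring. }
    assert (0 <= c s (S m) * a s m).
    { rewrite Hk. apply sum_nonneg. intros i Hi.
      apply Rmult_le_pos. apply IH; lia.
      rewrite (Nat.sub_succ_l i m Hi).
      pose proof (a_logconv s (m - i) m Hs ltac:(lia)). lra. }
    pose proof (a_pos s m).
    apply (Rmult_le_reg_r (a s m)); lra.
Qed.

Lemma c_le_a s : s <= 0 -> forall n, c s n <= a s n.
Proof.
  intros Hs n. destruct n as [|m]; [rewrite c0; left; apply a_pos|].
  rewrite (a_rec s m). rewrite sum_S. rewrite Nat.sub_diag, a0.
  assert (0 <= sum_f_R0 (fun j => c s j * a s (S m - j)) m).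
  { apply sum_nonneg; intros. apply Rmult_le_pos. apply c_nonneg; auto. left; apply a_pos. }
  lra.
Qed.

Definition pr (t : C) (n : nat) : R := fst (Cpow t n).
Definition pi (t : C) (n : nat) : R := snd (Cpow t n).

Lemma pr_bound t n : Rabs (pr t n) <= Cmod t ^ n.
Proof.
  unfold pr. rewrite <- Cmod_pow. pose proof (Rmax_Cmod (Cpow t n)).
  pose proof (Rmax_l (Rabs (fst (Cpow t n))) (Rabs (snd (Cpow t n)))). lra.
Qed.

Lemma pi_bound t n : Rabs (pi t n) <= Cmod t ^ n.
Proof.
  unfold pi. rewrite <- Cmod_pow. pose proof (Rmax_Cmod (Cpow t n)).
  pose proof (Rmax_r (Rabs (fst (Cpow t n))) (Rabs (snd (Cpow t n)))). lra.
Qed.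

Lemma pr_split t k n : (k <= n)%nat ->
  pr t n = pr t k * pr t (n - k) - pi t k * pi t (n - k).
Proof.
  intro H. unfold pr, pi. replace n with (k + (n - k))%nat at 1 by lia.
  rewrite Cpow_add_r. destruct (Cpow t k), (Cpow t (n - k)). simpl. ring.
Qed.

Lemma pi_split t k n : (k <= n)%nat ->
  pi t n = pr t k * pi t (n - k) + pi t k * pr t (n - k).
Proof.
  intro H. unfold pr, pi. replace n with (k + (n - k))%nat at 1 by lia.
  rewrite Cpow_add_r. destruct (Cpow t k), (Cpow t (n - k)). simpl. ring.
Qed.

Lemma pr0 t : pr t 0 = 1. Proof. reflexivity. Qed.
Lemma pi0 t : pi t 0 = 0. Proof. reflexivity. Qed.

Lemma ex_abs (f : nat -> R) (u : nat -> R) (q : R) :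
  0 <= q < 1 -> (forall n, Rabs (f n) <= 1) -> (forall n, Rabs (u n) <= q ^ n) ->
  ex_series (fun n => Rabs (f n * u n)).
Proof.
  intros Hq Hf Hu.
  apply (ex_series_le (K := R_AbsRing) (V := R_CompleteNormedModule)) with (b := fun n => q ^ n).
  - intro n. change (norm (Rabs (f n * u n))) with (Rabs (Rabs (f n * u n))).
    rewrite Rabs_Rabsolu, Rabs_mult.
    pose proof (Rabs_pos (f n)). pose proof (Rabs_pos (u n)).
    specialize (Hf n). specialize (Hu n). nra.
  - apply ex_series_geom. rewrite Rabs_pos_eq; lra.
Qed.

Lemma ex_of_abs (g : nat -> R) : ex_series (fun n => Rabs (g n)) -> ex_series g.
Proof. apply ex_series_Rabs. Qed.

Definition KA (s : R) (t : C) : C :=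
  (Series (fun n => a s n * pr t n), Series (fun n => a s n * pi t n)).
Definition KC (s : R) (t : C) : C :=
  (Series (fun n => c s n * pr t n), Series (fun n => c s n * pi t n)).

Lemma conv_eq s n : sum_f_R0 (fun k => c s k * a s (n - k)) n =
  match n with O => 0 | S _ => a s n end.
Proof.
  destruct n as [|m].
  - simpl. rewrite c0. ring.
  - rewrite (a_rec s m). reflexivity.
Qed.

Lemma abs_a s n : s <= 0 -> Rabs (a s n) <= 1.
Proof. intro Hs. rewrite Rabs_pos_eq by (left; apply a_pos). apply a_le1; auto. Qed.

Lemma abs_c s n : s <= 0 -> Rabs (c s n) <= 1.
Proof.
  intro Hs. rewrite Rabs_pos_eq by (apply c_nonneg; auto).
  pose proof (c_le_a s Hs n). pose proof (a_le1 s n Hs). lra.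
Qed.

Section Main.
Variable s : R.
Hypothesis Hs : s <= 0.
Variable t : C.
Hypothesis Ht : Cmod t < 1.

Let q := Cmod t.
Let Hq : 0 <= q < 1.
Proof. split; [apply Cmod_ge_0| exact Ht]. Qed.

Let EAa : ex_series (fun n => Rabs (a s n * pr t n)).
Proof. apply ex_abs with q; auto. intro; apply abs_a; auto. intro; apply pr_bound. Qed.
Let EAi : ex_series (fun n => Rabs (a s n * pi t n)).
Proof. apply ex_abs with q; auto. intro; apply abs_a; auto. intro; apply pi_bound. Qed.
Let ECa : ex_series (fun n => Rabs (c s n * pr t n)).
Proof. apply ex_abs with q; auto. intro; apply abs_c; auto. intro; apply pr_bound. Qed.
Let ECi : ex_series (fun n => Rabs (c s n * pi t n)).
Proof. apply ex_abs with q; auto. intro; apply abs_c; auto. intro; apply pi_bound. Qed.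

Let mult_S (f g : nat -> R) : ex_series (fun n => Rabs (f n)) -> ex_series (fun n => Rabs (g n)) ->
  Series (fun n => sum_f_R0 (fun k => f k * g (n - k)%nat) n) = Series f * Series g
  /\ ex_series (fun n => sum_f_R0 (fun k => f k * g (n - k)%nat) n).
Proof.
  intros Hf Hg.
  pose proof (is_series_mult f g (Series f) (Series g)
     (Series_correct _ (ex_series_Rabs _ Hf)) (Series_correct _ (ex_series_Rabs _ Hg)) Hf Hg) as H.
  split. apply is_series_unique; exact H. eexists; exact H.
Qed.

Lemma main_re :
  Series (fun n => c s n * pr t n) * Series (fun n => a s n * pr t n)
  - Series (fun n => c s n * pi t n) * Series (fun n => a s n * pi t n)
  = Series (fun n => a s n * pr t n) - 1.
Proof.
  destruct (mult_S _ _ ECa EAa) as [E1 X1].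
  destruct (mult_S _ _ ECi EAi) as [E2 X2].
  rewrite <- E1, <- E2. rewrite <- Series_minus by assumption.
  rewrite (Series_ext _ (fun n => sum_f_R0 (fun k => c s k * a s (n - k)) n * pr t n)).
  2:{ intro n. rewrite <- minus_sum. rewrite Rmult_comm, scal_sum. apply sum_eq.
      intros i Hi. rewrite (pr_split t i n Hi). ring. }
  assert (XG : ex_series (fun n => sum_f_R0 (fun k => c s k * a s (n - k)) n * pr t n)).
  { apply ex_series_ext with (a := fun n => sum_f_R0 (fun k => c s k * pr t k * (a s (n - k) * pr t (n - k))) n
                  - sum_f_R0 (fun k => c s k * pi t k * (a s (n - k) * pi t (n - k))) n).
    + intro n. rewrite <- minus_sum. rewrite Rmult_comm, scal_sum. apply sum_eq.
      intros i Hi. rewrite (pr_split t i n Hi). ring.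
    + apply (ex_series_minus (K:=R_AbsRing) (V:=R_NormedModule)); assumption. }
  rewrite (Series_incr_1 _ XG).
  rewrite (Series_incr_1 (fun n => a s n * pr t n)) by (apply ex_series_Rabs; auto).
  rewrite conv_eq, a0, pr0.
  rewrite (Series_ext (fun k => sum_f_R0 (fun k0 => c s k0 * a s (S k - k0)) (S k) * pr t (S k))
                      (fun k => a s (S k) * pr t (S k))).
  2:{ intro n. rewrite conv_eq. reflexivity. }
  ring.
Qed.

Lemma main_im :
  Series (fun n => c s n * pr t n) * Series (fun n => a s n * pi t n)
  + Series (fun n => c s n * pi t n) * Series (fun n => a s n * pr t n)
  = Series (fun n => a s n * pi t n).
Proof.
  destruct (mult_S _ _ ECa EAi) as [E1 X1].
  destruct (mult_S _ _ ECi EAa) as [E2 X2].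
  rewrite <- E1, <- E2. rewrite <- Series_plus by assumption.
  rewrite (Series_ext _ (fun n => sum_f_R0 (fun k => c s k * a s (n - k)) n * pi t n)).
  2:{ intro n. rewrite <- plus_sum. rewrite Rmult_comm, scal_sum. apply sum_eq.
      intros i Hi. rewrite (pi_split t i n Hi). ring. }
  assert (XG : ex_series (fun n => sum_f_R0 (fun k => c s k * a s (n - k)) n * pi t n)).
  { apply ex_series_ext with (a := fun n => sum_f_R0 (fun k => c s k * pr t k * (a s (n - k) * pi t (n - k))) n
                  + sum_f_R0 (fun k => c s k * pi t k * (a s (n - k) * pr t (n - k))) n).
    + intro n. rewrite <- plus_sum. rewrite Rmult_comm, scal_sum. apply sum_eq.
      intros i Hi. rewrite (pi_split t i n Hi). ring.
    + apply (ex_series_plus (K:=R_AbsRing) (V:=R_NormedModule)); assumption. }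
  rewrite (Series_incr_1 _ XG).
  rewrite (Series_incr_1 (fun n => a s n * pi t n)) by (apply ex_series_Rabs; auto).
  rewrite conv_eq, a0, pi0.
  rewrite (Series_ext (fun k => sum_f_R0 (fun k0 => c s k0 * a s (S k - k0)) (S k) * pi t (S k))
                      (fun k => a s (S k) * pi t (S k))).
  2:{ intro n. rewrite conv_eq. reflexivity. }
  ring.
Qed.

Lemma main_id : Cmult (KA s t) (Cminus (RtoC 1) (KC s t)) = RtoC 1.
Proof.
  pose proof main_re as H1. pose proof main_im as H2.
  unfold KA, KC, Cminus, Cmult, Cplus, Copp, RtoC. simpl.
  f_equal; nra.
Qed.

End Main.

Lemma ex_cpr s t : s <= 0 -> Cmod t < 1 -> ex_series (fun n => c s n * pr t n).
Proof. intros Hs Ht. apply ex_series_Rabs. apply ex_abs with (Cmod t); auto.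
  split; [apply Cmod_ge_0|auto]. intro; apply abs_c; auto. intro; apply pr_bound. Qed.
Lemma ex_cpi s t : s <= 0 -> Cmod t < 1 -> ex_series (fun n => c s n * pi t n).
Proof. intros Hs Ht. apply ex_series_Rabs. apply ex_abs with (Cmod t); auto.
  split; [apply Cmod_ge_0|auto]. intro; apply abs_c; auto. intro; apply pi_bound. Qed.
Lemma ex_apr s t : s <= 0 -> Cmod t < 1 -> ex_series (fun n => a s n * pr t n).
Proof. intros Hs Ht. apply ex_series_Rabs. apply ex_abs with (Cmod t); auto.
  split; [apply Cmod_ge_0|auto]. intro; apply abs_a; auto. intro; apply pr_bound. Qed.

Lemma Series_zero : Series (fun _ => 0) = 0.
Proof.
  rewrite (Series_ext _ (fun n => 0 * 1)) by (intro; ring).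
  rewrite Series_scal_l. ring.
Qed.

Lemma kern_KA s z w : kern s z w = KA s (Cmult z (Cconj w)).
Proof.
  unfold kern, CSeries, KA. f_equal; apply Series_ext; intro n;
  unfold a, pr, pi, Re, Im, RtoC; simpl; ring.
Qed.

Lemma pr_real r n : pr (RtoC r) n = r ^ n.
Proof. unfold pr. rewrite <- RtoC_pow. reflexivity. Qed.
Lemma pi_real r n : pi (RtoC r) n = 0.
Proof. unfold pi. rewrite <- RtoC_pow. reflexivity. Qed.

Lemma KA_real_pos s r : s <= 0 -> 0 <= r < 1 -> 1 <= fst (KA s (RtoC r)).
Proof.
  intros Hs Hr. unfold KA; simpl.
  assert (Hr' : Cmod (RtoC r) < 1) by (rewrite Cmod_R, Rabs_pos_eq; lra).
  rewrite Series_incr_1 by (apply ex_apr; auto).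
  rewrite a0, pr0.
  assert (0 <= Series (fun k => a s (S k) * pr (RtoC r) (S k))).
  { rewrite <- Series_zero. apply Series_le.
    - intro n. split; [lra|]. rewrite pr_real. apply Rmult_le_pos. left; apply a_pos.
      apply pow_le; lra.
    - apply (ex_series_incr_1 (fun n => a s n * pr (RtoC r) n)). apply ex_apr; auto. }
  lra.
Qed.

Lemma KC_real_lt1 s r : s <= 0 -> 0 <= r < 1 -> fst (KC s (RtoC r)) < 1.
Proof.
  intros Hs Hr.
  assert (Hr' : Cmod (RtoC r) < 1) by (rewrite Cmod_R, Rabs_pos_eq; lra).
  pose proof (main_id s Hs (RtoC r) Hr') as M.
  pose proof (KA_real_pos s r Hs Hr) as P.
  apply (f_equal fst) in M.
  assert (E2 : snd (KA s (RtoC r)) = 0).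
  { unfold KA; simpl. rewrite <- Series_zero. apply Series_ext. intro; rewrite pi_real; ring. }
  destruct (KA s (RtoC r)) as [A1 A2]. destruct (KC s (RtoC r)) as [C1 C2].
  simpl in *. subst A2. unfold RtoC in M. simpl in M.
  assert (A1 * (1 - C1) = 1) by lra.
  destruct (Rlt_le_dec C1 1); auto. nra.
Qed.

Definition bE (s : R) (z : C) (n : nat) : C :=
  Cmult (RtoC (sqrt (c s (S n)))) (Cpow z (S n)).

Lemma Cconj_RtoC r : Cconj (RtoC r) = RtoC r.
Proof. unfold Cconj, RtoC; simpl. f_equal. ring. Qed.

Lemma bE_term s z w n : s <= 0 ->
  Cmult (bE s z n) (Cconj (bE s w n)) = Cmult (RtoC (c s (S n))) (Cpow (Cmult z (Cconj w)) (S n)).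
Proof.
  intro Hs. unfold bE. rewrite Cmult_conj, Cconj_RtoC, Cpow_conj, Cpow_mult_l.
  replace (RtoC (c s (S n))) with (Cmult (RtoC (sqrt (c s (S n)))) (RtoC (sqrt (c s (S n))))).
  - ring.
  - rewrite <- RtoC_mult, sqrt_sqrt; auto. apply c_nonneg; auto.
Qed.

Lemma cinner_bE s z w : s <= 0 -> Cmod (Cmult z (Cconj w)) < 1 ->
  cinner (bE s z) (bE s w) = KC s (Cmult z (Cconj w)).
Proof.
  intros Hs Ht. unfold cinner, CSeries, KC.
  f_equal.
  - rewrite (Series_incr_1_aux (fun n => c s n * pr (Cmult z (Cconj w)) n)) by (rewrite c0; ring).
    apply Series_ext. intro n. rewrite bE_term by auto. unfold pr, Re, RtoC. simpl. ring.
  - rewrite (Series_incr_1_aux (fun n => c s n * pi (Cmult z (Cconj w)) n)) by (rewrite c0; ring).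
    apply Series_ext. intro n. rewrite bE_term by auto. unfold pi, Im, RtoC. simpl. ring.
Qed.

Lemma disc_prod z w : in_disc z -> in_disc w -> Cmod (Cmult z (Cconj w)) < 1.
Proof.
  unfold in_disc. intros Hz Hw. rewrite Cmod_mult, Cmod_conj.
  pose proof (Cmod_ge_0 z). pose proof (Cmod_ge_0 w). nra.
Qed.

Lemma bE_norm s z : s <= 0 -> in_disc z ->
  exists r, is_series (fun n => Cmod (bE s z n) ^ 2) r /\ r < 1.
Proof.
  intros Hs Hz. unfold in_disc in Hz.
  set (rho := Cmod z ^ 2).
  assert (Hrho : 0 <= rho < 1).
  { unfold rho. pose proof (Cmod_ge_0 z). split; nra. }
  assert (Hr' : Cmod (RtoC rho) < 1) by (rewrite Cmod_R, Rabs_pos_eq; lra).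
  assert (E : forall n, Cmod (bE s z n) ^ 2 = c s (S n) * pr (RtoC rho) (S n)).
  { intro n. unfold bE. rewrite Cmod_mult, Cmod_R, Cmod_pow, pr_real.
    rewrite Rabs_pos_eq by apply sqrt_pos. unfold rho.
    rewrite <- pow_mult. rewrite Rpow_mult_distr.
    replace (sqrt (c s (S n)) ^ 2) with (c s (S n)).
    2:{ simpl. rewrite Rmult_1_r, sqrt_sqrt; auto. apply c_nonneg; auto. }
    rewrite <- pow_mult. f_equal. f_equal. lia. }
  exists (fst (KC s (RtoC rho))). split.
  - eapply is_series_ext. intro n. symmetry. apply E.
    unfold KC; simpl.
    rewrite (Series_incr_1_aux (fun n => c s n * pr (RtoC rho) n)) by (rewrite c0; ring).
    apply Series_correct.
    apply (ex_series_incr_1 (fun n => c s n * pr (RtoC rho) n)). apply ex_cpr; auto.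
  - apply KC_real_lt1; auto.
Qed.

Lemma kern_formula s z w : s <= 0 -> in_disc z -> in_disc w ->
  Cmult (kern s z w) (Cminus (RtoC 1) (cinner (bE s z) (bE s w))) = RtoC 1.
Proof.
  intros Hs Hz Hw. rewrite kern_KA, cinner_bE by (auto; apply disc_prod; auto).
  apply main_id; auto. apply disc_prod; auto.
Qed.

Lemma RtoC1_neq0 : RtoC 1 <> RtoC 0.
Proof. intro H. apply (f_equal fst) in H. simpl in H. lra. Qed.

Lemma div_of_mult (k y : C) : Cmult k y = RtoC 1 -> k = Cdiv (RtoC 1) y.
Proof.
  intro H. assert (Hy : y <> RtoC 0).
  { intro E. rewrite E, Cmult_0_r in H. apply RtoC1_neq0. auto. }
  rewrite <- H. unfold Cdiv. field. auto.
Qed.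

Lemma has_emb_None s : s <= 0 -> has_embedding s None.
Proof.
  intro Hs. exists (bE s), (fun _ => RtoC 1). split; [|split].
  - intros z Hz. split; [exact I|]. apply bE_norm; auto.
  - intros. apply RtoC1_neq0.
  - intros z w Hz Hw. rewrite Cconj_RtoC, Cmult_1_l.
    apply div_of_mult. apply kern_formula; auto.
Qed.

Fixpoint sm (n : nat) (f : nat -> R) : R :=
  match n with O => 0 | S m => sm m f + f m end.

Lemma sm_shift d f : sm (S d) f = f O + sm d (fun k => f (S k)).
Proof. induction d as [|d IH]; simpl in *. ring. rewrite IH. ring. Qed.

Lemma sm_ext n f g : (forall i, (i < n)%nat -> f i = g i) -> sm n f = sm n g.
Proof. induction n; simpl; intros H; auto. rewrite IHn by (intros; apply H; lia). rewrite H by lia. auto. Qed.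

Lemma is_series_zero : is_series (fun _ : nat => 0) 0.
Proof.
  assert (E : ex_series (fun _ : nat => 0)).
  { apply ex_series_Rabs. eapply ex_series_ext; [|apply (ex_abs (fun _ => 0) (fun _ => 0) 0)].
    intro; simpl; rewrite Rmult_0_l; reflexivity. lra.
    intro; rewrite Rabs_R0; lra. intro; rewrite Rabs_R0. apply pow_le; lra. }
  pose proof (Series_correct _ E). rewrite Series_zero in H. exact H.
Qed.

Lemma is_series_finite d : forall f : nat -> R, (forall n, (d <= n)%nat -> f n = 0) -> is_series f (sm d f).
Proof.
  induction d as [|d IH]; intros f Hf.
  - simpl. eapply is_series_ext; [|exact is_series_zero]. intro n. symmetry. apply Hf. lia.
  - apply (is_series_decr_1 (K:=R_AbsRing) (V:=R_NormedModule)).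
    match goal with |- is_series _ ?l => replace l with (sm d (fun k => f (S k))) end.
    + apply IH. intros n Hn. apply Hf. lia.
    + rewrite sm_shift. change (plus ?x (opp ?y)) with (x + - y). ring.
Qed.

Lemma Series_finite d f : (forall n, (d <= n)%nat -> f n = 0) -> Series f = sm d f.
Proof. intro H. apply is_series_unique. apply is_series_finite; auto. Qed.

Lemma a_s0 n : a 0 n = 1.
Proof. unfold a. apply Rpower_O. apply INR1_pos. Qed.

Lemma c_s0 : forall m, sum_f_R0 (c 0) (S m) = 1 /\ c 0 (S (S m)) = 0.
Proof.
  assert (E : forall m, c 0 (S m) = 1 - sum_f_R0 (c 0) m).
  { intro m. rewrite c_rec, a_s0. f_equal. apply sum_eq. intros. rewrite a_s0. ring. }
  induction m as [|m [IH1 IH2]].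
  - assert (c 0 1 = 1) by (rewrite E; simpl; rewrite c0; ring).
    split. simpl. rewrite c0. lra. rewrite E. simpl. rewrite c0. lra.
  - split. rewrite sum_S, IH1, IH2. ring. rewrite E. rewrite sum_S, IH1, IH2. ring.
Qed.

Lemma c_s0_ge2 n : (2 <= n)%nat -> c 0 n = 0.
Proof. intro H. destruct n as [|[|m]]; try lia. apply c_s0. Qed.

Lemma Cmult_conj0 z : Cmult z (Cconj (RtoC 0)) = RtoC 0.
Proof. unfold Cmult, Cconj, RtoC; simpl. f_equal; ring. Qed.

Lemma KC_zero s : KC s (RtoC 0) = RtoC 0.
Proof.
  unfold KC. apply injective_projections; simpl;
  (transitivity (Series (fun _ => 0)); [apply Series_ext; intro n| apply Series_zero]).
  - rewrite pr_real. destruct n. rewrite c0; ring. simpl. ring.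
  - rewrite pi_real. ring.
Qed.

Lemma kern_z0 s z : s <= 0 -> kern s z (RtoC 0) = RtoC 1.
Proof.
  intro Hs. rewrite kern_KA, Cmult_conj0.
  assert (Cmod (RtoC 0) < 1) by (rewrite Cmod_R, Rabs_R0; lra).
  pose proof (main_id s Hs (RtoC 0) H) as M. rewrite KC_zero in M.
  rewrite <- M. destruct (KA s (RtoC 0)) as [x y]. unfold Cminus, Cmult, Cplus, Copp, RtoC; simpl. f_equal; ring.
Qed.

Lemma kern0_half : kern 0 (RtoC (1/2)) (RtoC (1/2)) = RtoC (4/3).
Proof.
  rewrite kern_KA. replace (Cmult (RtoC (1/2)) (Cconj (RtoC (1/2)))) with (RtoC (1/4)).
  2:{ unfold Cmult, Cconj, RtoC; simpl. f_equal; field. }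
  unfold KA. apply injective_projections; simpl.
  - apply is_series_unique. replace (4/3) with (/ (1 - 1/4)) by field.
    apply (is_series_ext (fun n => (1/4)^n)).
    intro n. rewrite a_s0, pr_real. rewrite Rmult_1_l. reflexivity. apply is_series_geom. rewrite Rabs_pos_eq; lra.
  - rewrite <- Series_zero. apply Series_ext. intro n. rewrite pi_real. ring.
Qed.

Lemma in_disc_real r : -1 < r < 1 -> in_disc (RtoC r).
Proof. intro H. unfold in_disc. rewrite Cmod_R. apply Rabs_def1; lra. Qed.

Lemma has_emb_s0_1 : has_embedding 0 (Some 1%nat).
Proof.
  destruct (has_emb_None 0 ltac:(lra)) as [b [delta [H1 [H2 H3]]]].
  exists (bE 0), (fun _ => RtoC 1). split; [|split].
  - intros z Hz. split.
    + intros n Hn. unfold bE. rewrite c_s0_ge2 by lia. rewrite sqrt_0.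
      unfold Cmult, RtoC; simpl. f_equal; ring.
    + apply bE_norm; auto. lra.
  - intros. apply RtoC1_neq0.
  - intros z w Hz Hw. rewrite Cconj_RtoC, Cmult_1_l.
    apply div_of_mult. apply kern_formula; auto. lra.
Qed.

Lemma no_emb_s0_0 : ~ has_embedding 0 (Some 0%nat).
Proof.
  intros [b [delta [Hb [Hd Hk]]]].
  assert (Hin : forall z w, in_disc z -> in_disc w -> cinner (b z) (b w) = RtoC 0).
  { intros z w Hz Hw. destruct (Hb z Hz) as [Bz _]. destruct (Hb w Hw) as [Bw _].
    unfold cinner, CSeries. apply injective_projections; simpl;
    (transitivity (Series (fun _ => 0)); [apply Series_ext; intro n| apply Series_zero]);
    rewrite (Bz n) by lia; unfold Re, Im, Cmult, RtoC; simpl; ring. }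
  assert (Hk' : forall z w, in_disc z -> in_disc w -> kern 0 z w = Cmult (delta z) (Cconj (delta w))).
  { intros z w Hz Hw. rewrite Hk, Hin by auto. unfold Cdiv.
    replace (Cminus (RtoC 1) (RtoC 0)) with (RtoC 1) by (unfold Cminus, Cplus, Copp, RtoC; simpl; f_equal; ring).
    replace (Cinv (RtoC 1)) with (RtoC 1) by (unfold Cinv, RtoC; simpl; f_equal; field).
    rewrite Cmult_1_r. reflexivity. }
  assert (D0 : in_disc (RtoC 0)) by (apply in_disc_real; lra).
  assert (Dh : in_disc (RtoC (1/2))) by (apply in_disc_real; lra).
  pose proof (Hk' _ _ D0 D0) as E00. rewrite kern_z0 in E00 by lra.
  pose proof (Hk' _ _ Dh D0) as Eh0. rewrite kern_z0 in Eh0 by lra.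
  pose proof (Hk' _ _ Dh Dh) as Ehh. rewrite kern0_half in Ehh.
  set (d0 := delta (RtoC 0)) in *. set (dh := delta (RtoC (1/2))) in *.
  assert (dh = d0).
  { transitivity (Cmult dh (Cmult d0 (Cconj d0))).
    rewrite <- E00. rewrite Cmult_1_r. reflexivity.
    transitivity (Cmult d0 (Cmult dh (Cconj d0))). ring.
    rewrite <- Eh0. apply Cmult_1_r. }
  rewrite H, <- E00 in Ehh. apply (f_equal fst) in Ehh. simpl in Ehh. lra.
Qed.

Lemma part1 : emb_dim_is 0 (Some 1%nat).
Proof.
  split. apply has_emb_s0_1. intros d' Hd'. assert (d' = 0%nat) by lia. subst. apply no_emb_s0_0.
Qed.

Lemma sum_tail (f : nat -> R) M : (forall j, (M < j)%nat -> f j = 0) ->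
  forall n, (M <= n)%nat -> sum_f_R0 f n = sum_f_R0 f M.
Proof.
  intros Hf n Hn. induction n as [|n IH].
  - assert (M = 0%nat) by lia. subst. reflexivity.
  - destruct (Nat.eq_dec M (S n)) as [<-|Hne]; [reflexivity|].
    rewrite sum_S, IH by lia. rewrite Hf by lia. ring.
Qed.

Lemma a_conv s n : (1 <= n)%nat -> a s n = sum_f_R0 (fun j => c s j * a s (n - j)) n.
Proof. intro H. destruct n; [lia|]. apply a_rec. Qed.

Lemma ln_le_sub1 x : 0 < x -> ln x <= x - 1.
Proof. intro H. pose proof (exp_ineq1_le (ln x)). rewrite exp_ln in H0; lra. Qed.

Lemma c_inf s : s < 0 -> forall K, exists n, (K <= n)%nat /\ c s n <> 0.
Proof.
  intros Hs K0. apply NNPP. intro Hno.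
  assert (HZ : forall n, (K0 <= n)%nat -> c s n = 0).
  { intros n Hn. apply NNPP. intro Hc. apply Hno. exists n. auto. }
  set (M := K0).
  assert (HZ' : forall j, (M < j)%nat -> c s j = 0) by (intros; apply HZ; unfold M; lia).
  assert (Hs' : s <= 0) by lra.
  set (S0 := sum_f_R0 (c s) M).
  assert (Hrep : forall n, (M < n)%nat -> a s n = sum_f_R0 (fun j => c s j * a s (n - j)) M).
  { intros n Hn. rewrite a_conv by lia. apply sum_tail; [|lia].
    intros j Hj. rewrite HZ'; auto. ring. }
  destruct (Rle_lt_dec 1 S0) as [HS|HS].
  - (* a (S M) >= S0 * a M >= a M *)
    assert (a s M * S0 <= a s (S M)).
    { rewrite (Hrep (S M)) by lia. unfold S0. rewrite scal_sum. apply sum_Rle.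
      intros j Hj. destruct j as [|j].
      + rewrite c0. lra.
      + apply Rmult_le_compat_l. apply c_nonneg; auto.
        apply a_anti; auto; lia. }
    pose proof (a_santi s M Hs). pose proof (a_pos s M). nra.
  - assert (Hle : forall m, (1 <= m)%nat -> a s (m + M) <= S0 * a s m).
    { intros m Hm. rewrite (Hrep (m + M)%nat) by lia. unfold S0. rewrite Rmult_comm, scal_sum. apply sum_Rle.
      intros j Hj. apply Rmult_le_compat_l. apply c_nonneg; auto.
      apply a_anti; auto; lia. }
    assert (Hge : forall m, a s m * (1 + s * INR M / (1 + INR m)) <= a s (m + M)).
    { intro m. unfold a. rewrite plus_INR.
      pose proof (pos_INR m). pose proof (pos_INR M).
      assert (Hx : 0 < (1 + (INR m + INR M)) / (1 + INR m)) by (apply Rdiv_lt_0_compat; lra).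
      pose proof (ln_le_sub1 _ Hx) as L. rewrite ln_div in L by lra.
      replace ((1 + (INR m + INR M)) / (1 + INR m) - 1) with (INR M / (1 + INR m)) in L by (field; lra).
      unfold Rpower.
      replace (s * ln (1 + (INR m + INR M))) with (s * ln (1 + INR m) + s * (ln (1 + (INR m + INR M)) - ln (1 + INR m))) by ring.
      rewrite exp_plus. apply Rmult_le_compat_l. left; apply exp_pos.
      eapply Rle_trans; [|apply exp_ineq1_le].
      assert (s * (INR M / (1 + INR m)) <= s * (ln (1 + (INR m + INR M)) - ln (1 + INR m))).
      { apply Rmult_le_compat_neg_l; lra. }
      unfold Rdiv in *. lra. }
    destruct (archimed (- s * INR M / (1 - S0))) as [Har _].
    set (N := Z.to_nat (up (- s * INR M / (1 - S0)))).
    assert (HN : - s * INR M / (1 - S0) < INR N).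
    { unfold N. rewrite (INR_IZR_INZ (Z.to_nat _)). rewrite Z2Nat.id. lra.
      assert (0 <= - s * INR M / (1 - S0)).
      { apply Rdiv_le_0_compat. pose proof (pos_INR M). nra. lra. }
      apply le_IZR. lra. }
    set (m := S N).
    pose proof (Hle m ltac:(unfold m; lia)) as H1. pose proof (Hge m) as H2.
    pose proof (a_pos s m).
    assert (1 + s * INR M / (1 + INR m) <= S0).
    { apply (Rmult_le_reg_l (a s m)); auto. lra. }
    assert (INR m = INR N + 1) by (unfold m; rewrite S_INR; reflexivity).
    pose proof (pos_INR N). pose proof (pos_INR M).
    assert (- s * INR M < (1 - S0) * INR N).
    { apply (Rmult_lt_reg_r (/ (1 - S0))). apply Rinv_0_lt_compat; lra.
      replace ((1 - S0) * INR N * / (1 - S0)) with (INR N) by (field; lra). exact HN. }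
    assert (s * INR M / (1 + INR m) > S0 - 1 - 0).
    { apply Rmult_gt_reg_l with (1 + INR m). lra.
      replace ((1 + INR m) * (s * INR M / (1 + INR m))) with (s * INR M) by (field; lra). nra. }
    lra.
Qed.

Lemma sm_plus n f g : sm n (fun i => f i + g i) = sm n f + sm n g.
Proof. induction n; simpl; [ring|rewrite IHn; ring]. Qed.
Lemma sm_scal n x f : sm n (fun i => x * f i) = x * sm n f.
Proof. induction n; simpl; [ring|rewrite IHn; ring]. Qed.
Lemma sm_zero n : sm n (fun _ => 0) = 0.
Proof. induction n; simpl; [ring|rewrite IHn; ring]. Qed.

Definition skip (p j : nat) : nat := if Nat.ltb j p then j else S j.
Definition unskip (p i : nat) : nat := if Nat.ltb i p then i else pred i.

Lemma skip_neq p j : skip p j <> p.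
Proof. unfold skip. destruct (Nat.ltb_spec j p); lia. Qed.
Lemma unskip_skip p j : unskip p (skip p j) = j.
Proof. unfold skip, unskip. destruct (Nat.ltb_spec j p); destruct (Nat.ltb_spec (S j) p);
  try destruct (Nat.ltb_spec j p); simpl; lia. Qed.
Lemma skip_lt p j N : (j < N)%nat -> (skip p j < S N)%nat.
Proof. unfold skip. destruct (Nat.ltb_spec j p); lia. Qed.

Lemma sm_skip N : forall f p, (p <= N)%nat -> sm (S N) f = sm N (fun j => f (skip p j)) + f p.
Proof.
  induction N as [|N IH]; intros f p Hp.
  - assert (p = 0%nat) by lia. subst. simpl. ring.
  - destruct (Nat.eq_dec p (S N)) as [->|Hne].
    + change (sm (S (S N)) f) with (sm (S N) f + f (S N)). f_equal.
      apply sm_ext. intros i Hi. unfold skip. destruct (Nat.ltb_spec i (S N)); [reflexivity|lia].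
    + change (sm (S (S N)) f) with (sm (S N) f + f (S N)).
      rewrite (IH f p) by lia. simpl.
      replace (skip p N) with (S N) by (unfold skip; destruct (Nat.ltb_spec N p); lia). ring.
Qed.

Lemma dep : forall D N (v : nat -> nat -> R), (D < N)%nat ->
  exists lam : nat -> R, (exists j, (j < N)%nat /\ lam j <> 0) /\
    forall k, (k < D)%nat -> sm N (fun j => lam j * v j k) = 0.
Proof.
  induction D as [|D IH]; intros N v HN.
  - exists (fun _ => 1). split. exists 0%nat. split; [lia|lra]. intros; lia.
  - destruct (classic (exists p, (p < N)%nat /\ v p D <> 0)) as [[p [Hp Hv]]|Hno].
    + destruct N as [|N']; [lia|].
      set (w := fun j k => v (skip p j) k - v (skip p j) D / v p D * v p k).
      destruct (IH N' w ltac:(lia)) as [mu [[j1 [Hj1 Hmu]] Hsum]].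
      set (X := sm N' (fun j => mu j * v (skip p j) D)).
      exists (fun i => if Nat.eqb i p then - X / v p D else mu (unskip p i)).
      assert (Hlam : forall j, (if Nat.eqb (skip p j) p then - X / v p D else mu (unskip p (skip p j))) = mu j).
      { intro j. rewrite (proj2 (Nat.eqb_neq _ _) (skip_neq p j)). rewrite unskip_skip. reflexivity. }
      split.
      * exists (skip p j1). split. apply skip_lt; auto. rewrite Hlam. auto.
      * intros k Hk. rewrite (sm_skip N' _ p) by lia. rewrite Nat.eqb_refl.
        rewrite (sm_ext _ _ (fun j => mu j * v (skip p j) k)) by (intros; rewrite Hlam; reflexivity).
        destruct (Nat.eq_dec k D) as [->|HkD].
        -- unfold X. field. auto.
        -- specialize (Hsum k ltac:(lia)).
           assert (Ew : forall i, (i < N')%nat -> mu i * w i k = mu i * v (skip p i) k + (- (v p k / v p D)) * (mu i * v (skip p i) D)).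
           { intros i Hi. unfold w, Rdiv. ring. }
           rewrite (sm_ext _ _ _ Ew) in Hsum.
           rewrite sm_plus, sm_scal in Hsum. fold X in Hsum.
           assert (E : sm N' (fun j => mu j * v (skip p j) k) = v p k / v p D * X) by lra.
           rewrite E. field. auto.
    + destruct (IH N v ltac:(lia)) as [lam [Hnz Hsum]].
      exists lam. split; auto. intros k Hk.
      destruct (Nat.eq_dec k D) as [->|HkD].
      * rewrite (sm_ext _ _ (fun _ => 0)). apply sm_zero.
        intros i Hi. assert (v i D = 0). { apply NNPP. intro. apply Hno. exists i. auto. }
        rewrite H. ring.
      * apply Hsum. lia.
Qed.

Lemma sm_abs n f : Rabs (sm n f) <= sm n (fun i => Rabs (f i)).
Proof. induction n; simpl. rewrite Rabs_R0; lra. eapply Rle_trans. apply Rabs_triang. lra. Qed.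
Lemma sm_le n f g : (forall i, (i < n)%nat -> f i <= g i) -> sm n f <= sm n g.
Proof. induction n; simpl; intros H. lra. assert (f n <= g n) by (apply H; lia).
  assert (sm n f <= sm n g) by (apply IHn; intros; apply H; lia). lra. Qed.
Lemma sm_nonneg n f : (forall i, (i < n)%nat -> 0 <= f i) -> 0 <= sm n f.
Proof. intro H. rewrite <- (sm_zero n). apply sm_le. auto. Qed.

Lemma pow_le_one y i : 0 <= y <= 1 -> y ^ i <= 1.
Proof. intro H. induction i; simpl. lra. pose proof (pow_le y i (proj1 H)). nra. Qed.

Lemma small_poly : forall N (lam : nat -> R), (exists j, (j < N)%nat /\ lam j <> 0) ->
  exists eps, 0 < eps /\ forall y, 0 < y < eps -> sm N (fun j => lam j * y ^ j) <> 0.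
Proof.
  induction N as [|N IH]; intros lam [j [Hj Hl]]; [lia|].
  assert (Hsplit : forall y, sm (S N) (fun j => lam j * y ^ j) = lam 0%nat + y * sm N (fun j => lam (S j) * y ^ j)).
  { intro y. rewrite sm_shift. rewrite <- sm_scal. simpl. rewrite Rmult_1_r. f_equal.
    apply sm_ext. intros; ring. }
  destruct (Req_dec (lam 0%nat) 0) as [H0|H0].
  - destruct j as [|j']; [contradiction|].
    destruct (IH (fun j => lam (S j))) as [eps [Heps Hy]]. exists j'. split; [lia|auto].
    exists eps. split; auto. intros y Hy'. rewrite Hsplit, H0.
    specialize (Hy y Hy'). intro E. apply Hy. apply (Rmult_eq_reg_l y); lra.
  - set (L := sm N (fun j => Rabs (lam (S j)))).
    assert (HL : 0 <= L) by (apply sm_nonneg; intros; apply Rabs_pos).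
    pose proof (Rabs_pos_lt _ H0) as Ha.
    exists (Rmin 1 (Rabs (lam 0%nat) / (L + 1))). split.
    + apply Rmin_pos. lra. apply Rdiv_lt_0_compat; lra.
    + intros y [Hy1 Hy2]. rewrite Hsplit.
      assert (Hy3 : y < 1) by (eapply Rlt_le_trans; [exact Hy2| apply Rmin_l]).
      assert (Hy4 : y < Rabs (lam 0%nat) / (L + 1)) by (eapply Rlt_le_trans; [exact Hy2| apply Rmin_r]).
      assert (HB : Rabs (sm N (fun j => lam (S j) * y ^ j)) <= L).
      { eapply Rle_trans. apply sm_abs. apply sm_le. intros i Hi. rewrite Rabs_mult.
        rewrite (Rabs_pos_eq (y ^ i)) by (apply pow_le; lra).
        assert (y ^ i <= 1) by (apply pow_le_one; lra).
        pose proof (Rabs_pos (lam (S i))). nra. }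
      assert (y * (L + 1) < Rabs (lam 0%nat)).
      { apply (Rmult_lt_compat_r (L + 1)) in Hy4; [|lra].
        replace (Rabs (lam 0%nat) / (L + 1) * (L + 1)) with (Rabs (lam 0%nat)) in Hy4 by (field; lra). lra. }
      intro E.
      assert (lam 0%nat = - (y * sm N (fun j => lam (S j) * y ^ j))) by lra.
      assert (Rabs (lam 0%nat) = y * Rabs (sm N (fun j => lam (S j) * y ^ j))).
      { rewrite H1, Rabs_Ropp, Rabs_mult, (Rabs_pos_eq y) by lra. reflexivity. }
      nra.
Qed.

Lemma CV_pos (e : nat -> R) B : (forall n, Rabs (e n) <= B) -> Rbar_lt 0 (CV_radius e).
Proof.
  intro HB. destruct (CV_radius_bounded e) as [Hub _].
  assert (H1 : Rbar_le 1 (CV_radius e)).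
  { apply Hub. exists B. intro n. rewrite pow1, Rmult_1_r. auto. }
  destruct (CV_radius e) as [r| |]; simpl in *; auto; lra.
Qed.

Lemma ps_unique (e : nat -> R) B : (forall n, Rabs (e n) <= B) ->
  (forall x, Rabs x < 1 -> PSeries e x = 0) -> forall n, e n = 0.
Proof.
  intros HB HP n.
  apply (PSeries_ext_recip e (fun _ => 0) n).
  - apply CV_pos with B; auto.
  - apply CV_pos with 0. intro; rewrite Rabs_R0; lra.
  - exists (mkposreal 1 Rlt_0_1). intros y Hy.
    change (Rabs (y - 0) < 1) in Hy. rewrite Rminus_0_r in Hy.
    rewrite HP by auto. unfold PSeries. rewrite <- Series_zero at 1. apply Series_ext. intro; ring.
Qed.

Fixpoint smC (n : nat) (f : nat -> C) : C :=
  match n with O => RtoC 0 | S m => Cplus (smC m f) (f m) end.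

Lemma fst_smC n f : fst (smC n f) = sm n (fun i => fst (f i)).
Proof. induction n; simpl; auto. rewrite IHn. reflexivity. Qed.
Lemma snd_smC n f : snd (smC n f) = sm n (fun i => snd (f i)).
Proof. induction n; simpl; auto. rewrite IHn. reflexivity. Qed.
Lemma smC_shift d f : smC (S d) f = Cplus (f O) (smC d (fun k => f (S k))).
Proof. induction d as [|d IH]. simpl. ring. change (smC (S (S d)) f) with (Cplus (smC (S d) f) (f (S d))).
  rewrite IH. simpl. ring. Qed.
Lemma smC_scal n x f : Cmult x (smC n f) = smC n (fun i => Cmult x (f i)).
Proof. induction n; simpl. unfold Cmult, RtoC; simpl; f_equal; ring. rewrite <- IHn. ring. Qed.

Lemma sm_app A B f : sm (A + B) f = sm A f + sm B (fun k => f (A + k)%nat).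
Proof. induction B as [|B IH]. simpl. rewrite Nat.add_0_r. ring.
  rewrite Nat.add_succ_r. simpl. rewrite IH. ring. Qed.

Lemma sm_swap N D (g : nat -> nat -> R) :
  sm N (fun j => sm D (fun k => g j k)) = sm D (fun k => sm N (fun j => g j k)).
Proof.
  induction N as [|N IH]; simpl.
  - symmetry. apply sm_zero.
  - rewrite IH. rewrite <- sm_plus. reflexivity.
Qed.

Lemma is_series_sm N (g : nat -> nat -> R) (L : nat -> R) :
  (forall j, (j < N)%nat -> is_series (g j) (L j)) ->
  is_series (fun n => sm N (fun j => g j n)) (sm N L).
Proof.
  induction N as [|N IH]; intro H; simpl.
  - apply is_series_zero.
  - apply (is_series_plus (K:=R_AbsRing) (V:=R_NormedModule)).
    apply IH; intros; apply H; lia. apply H; lia.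
Qed.

Lemma smC_ext n f g : (forall i, (i < n)%nat -> f i = g i) -> smC n f = smC n g.
Proof. induction n; simpl; intros H; auto. rewrite IHn by (intros; apply H; lia). rewrite H by lia. auto. Qed.

Definition mfun (s t : R) : R := 1 - fst (KC s (RtoC t)).

Lemma KC_real_snd s t : snd (KC s (RtoC t)) = 0.
Proof. unfold KC; simpl. rewrite <- Series_zero. apply Series_ext. intro; rewrite pi_real; ring. Qed.

Lemma Cinv0 : Cinv (RtoC 0) = RtoC 0.
Proof. unfold Cinv, RtoC; simpl. f_equal; unfold Rdiv; ring. Qed.

Lemma conj_real_mult x y : Cmult (RtoC x) (Cconj (RtoC y)) = RtoC (x * y).
Proof. unfold Cmult, Cconj, RtoC; simpl. f_equal; ring. Qed.

Section Fin.
Variable s : R.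
Hypothesis Hs : s < 0.
Variable d : nat.
Variable b : C -> nat -> C.
Variable delta : C -> C.
Hypothesis Hb : forall z, in_disc z -> in_ball (Some d) (b z).
Hypothesis Hd : forall z, in_disc z -> delta z <> RtoC 0.
Hypothesis Hk : forall z w, in_disc z -> in_disc w ->
       kern s z w = Cdiv (Cmult (delta z) (Cconj (delta w)))
                         (Cminus (RtoC 1) (cinner (b z) (b w))).

Let Hs' : s <= 0. Proof. lra. Qed.

Lemma cinner_fin z w : in_disc z -> in_disc w ->
  cinner (b z) (b w) = smC d (fun n => Cmult (b z n) (Cconj (b w n))).
Proof.
  intros Hz Hw. destruct (Hb z Hz) as [Bz _].
  unfold cinner, CSeries. apply injective_projections; simpl.
  - rewrite fst_smC. apply Series_finite. intros n Hn. rewrite (Bz n Hn).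
    unfold Re, Cmult, RtoC; simpl. ring.
  - rewrite snd_smC. apply Series_finite. intros n Hn. rewrite (Bz n Hn).
    unfold Im, Cmult, RtoC; simpl. ring.
Qed.

Lemma step1 x y : -1 < x < 1 -> -1 < y < 1 ->
  Cmult (RtoC (mfun s (x * y))) (Cmult (delta (RtoC x)) (Cconj (delta (RtoC y))))
  = Cminus (RtoC 1) (cinner (b (RtoC x)) (b (RtoC y))).
Proof.
  intros Hx Hy.
  assert (Dx : in_disc (RtoC x)) by (apply in_disc_real; auto).
  assert (Dy : in_disc (RtoC y)) by (apply in_disc_real; auto).
  assert (Ht : Cmod (RtoC (x * y)) < 1).
  { rewrite Cmod_R, Rabs_mult.
    pose proof (Rabs_pos x). pose proof (Rabs_pos y).
    assert (Rabs x < 1) by (apply Rabs_def1; lra). assert (Rabs y < 1) by (apply Rabs_def1; lra). nra. }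
  pose proof (main_id s Hs' _ Ht) as HM.
  assert (EM : Cminus (RtoC 1) (KC s (RtoC (x * y))) = RtoC (mfun s (x * y))).
  { unfold mfun. pose proof (KC_real_snd s (x * y)) as E0.
    destruct (KC s (RtoC (x * y))) as [k1 k2]. simpl in E0. subst k2.
    unfold Cminus, Cplus, Copp, RtoC; simpl. f_equal; ring. }
  rewrite EM in HM.
  pose proof (Hk _ _ Dx Dy) as HK. rewrite kern_KA, conj_real_mult in HK.
  set (K := KA s (RtoC (x * y))) in *.
  set (P := Cmult (delta (RtoC x)) (Cconj (delta (RtoC y)))) in *.
  set (Q := Cminus (RtoC 1) (cinner (b (RtoC x)) (b (RtoC y)))) in *.
  set (M := RtoC (mfun s (x * y))) in *.
  assert (HQ : Q <> RtoC 0).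
  { intro E. rewrite E in HK. unfold Cdiv in HK. rewrite Cinv0, Cmult_0_r in HK.
    rewrite HK, Cmult_0_l in HM. apply RtoC1_neq0. auto. }
  assert (KQ : Cmult K Q = P). { rewrite HK. unfold Cdiv. field. auto. }
  rewrite <- KQ. transitivity (Cmult (Cmult K M) Q). ring. rewrite HM. ring.
Qed.

Definition phi (k : nat) (z : C) : C :=
  match k with O => Cinv (delta z) | S i => Cmult (Cinv (delta z)) (b z i) end.
Definition psi (k : nat) (z : C) : C :=
  match k with O => Cconj (Cinv (delta z)) | S i => Copp (Cconj (Cmult (Cinv (delta z)) (b z i))) end.

Lemma step2 x y : -1 < x < 1 -> -1 < y < 1 ->
  mfun s (x * y) = sm (S d) (fun k => fst (phi k (RtoC x)) * fst (psi k (RtoC y))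
                                      - snd (phi k (RtoC x)) * snd (psi k (RtoC y))).
Proof.
  intros Hx Hy.
  assert (Dx : in_disc (RtoC x)) by (apply in_disc_real; auto).
  assert (Dy : in_disc (RtoC y)) by (apply in_disc_real; auto).
  pose proof (step1 x y Hx Hy) as H1. rewrite cinner_fin in H1 by auto.
  set (I := smC d (fun n => Cmult (b (RtoC x) n) (Cconj (b (RtoC y) n)))) in *.
  set (A := Cinv (delta (RtoC x))). set (B := Cconj (Cinv (delta (RtoC y)))).
  set (p := delta (RtoC x)) in *. set (q := Cconj (delta (RtoC y))) in *.
  set (M := RtoC (mfun s (x * y))) in *.
  assert (pA : Cmult p A = RtoC 1) by (unfold A, p; apply Cinv_r; auto).
  assert (qB : Cmult q B = RtoC 1).
  { unfold q, B. rewrite <- Cmult_conj, Cinv_r by auto. apply Cconj_RtoC. }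
  assert (E : smC (S d) (fun k => Cmult (phi k (RtoC x)) (psi k (RtoC y))) = M).
  { rewrite smC_shift. simpl phi. simpl psi. fold A B.
    rewrite (smC_ext _ _ (fun i => Cmult (Copp (Cmult A B)) (Cmult (b (RtoC x) i) (Cconj (b (RtoC y) i))))).
    2:{ intros i Hi. unfold B. rewrite Cmult_conj. unfold A, p. ring. }
    rewrite <- smC_scal. fold I.
    replace I with (Cminus (RtoC 1) (Cmult M (Cmult p q))) by (rewrite H1; ring).
    transitivity (Cmult M (Cmult (Cmult p A) (Cmult q B))). unfold A, B, p. ring.
    rewrite pA, qB. ring. }
  apply (f_equal fst) in E. rewrite fst_smC in E. unfold M in E.
  change (fst (RtoC ?r)) with r in E.
  rewrite <- E. apply sm_ext. intros. simpl. ring.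
Qed.

Definition rr (j : nat) : R := (1/2) ^ (S j).
Definition DD : nat := (S d + S d)%nat.
Definition NN : nat := S DD.
Definition vv (j k : nat) : R :=
  if Nat.ltb k (S d) then fst (psi k (RtoC (rr j))) else - snd (psi (k - S d) (RtoC (rr j))).
Definition FF (k : nat) (x : R) : R :=
  if Nat.ltb k (S d) then fst (phi k (RtoC x)) else snd (phi (k - S d) (RtoC x)).

Lemma rr_bounds j : 0 < rr j <= 1/2.
Proof.
  unfold rr. simpl. split. apply Rmult_lt_0_compat. lra. apply pow_lt; lra.
  pose proof (pow_le_one (1/2) j ltac:(lra)). lra.
Qed.

Lemma step3 x j : -1 < x < 1 -> mfun s (x * rr j) = sm DD (fun k => FF k x * vv j k).
Proof.
  intro Hx. pose proof (rr_bounds j).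
  rewrite step2 by (auto; lra). unfold DD. rewrite sm_app.
  rewrite (sm_ext _ _ (fun k => fst (phi k (RtoC x)) * fst (psi k (RtoC (rr j))) +
                                 snd (phi k (RtoC x)) * (- snd (psi k (RtoC (rr j)))))) by (intros; ring).
  rewrite sm_plus. f_equal.
  - apply sm_ext. intros i Hi. unfold FF, vv. destruct (Nat.ltb_spec i (S d)); [reflexivity|lia].
  - apply sm_ext. intros i Hi. unfold FF, vv. destruct (Nat.ltb_spec (S d + i) (S d)); [lia|].
    replace (S d + i - S d)%nat with i by lia. reflexivity.
Qed.

Lemma no_fin : False.
Proof.
  destruct (dep DD NN vv ltac:(unfold NN; lia)) as [lam [[j1 [Hj1 Hl1]] Hsum]].
  assert (H4 : forall x, -1 < x < 1 -> sm NN (fun j => lam j * mfun s (x * rr j)) = 0).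
  { intros x Hx.
    rewrite (sm_ext _ _ (fun j => sm DD (fun k => FF k x * (lam j * vv j k)))).
    2:{ intros j Hj. rewrite step3 by auto. rewrite <- sm_scal. apply sm_ext. intros; ring. }
    rewrite sm_swap. rewrite (sm_ext _ _ (fun _ => 0)). apply sm_zero.
    intros k Hk0. rewrite sm_scal, Hsum by auto. ring. }
  set (e := fun n => sm NN (fun j => lam j * ((if Nat.eqb n 0 then 1 else 0) - c s n * rr j ^ n))).
  assert (H5 : forall x, Rabs x < 1 -> PSeries e x = 0).
  { intros x Hx. rewrite <- (H4 x) by (apply Rabs_def2 in Hx; lra).
    apply is_series_unique.
    apply (is_series_ext (fun n => sm NN (fun j => lam j * ((if Nat.eqb n 0 then 1 else 0)
                                   - c s n * pr (RtoC (x * rr j)) n)))).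
    { intro n. unfold e. rewrite Rmult_comm, <- sm_scal. apply sm_ext. intros j Hj.
      rewrite pr_real, Rpow_mult_distr. destruct n; simpl; ring. }
    apply is_series_sm. intros j Hj.
    pose proof (rr_bounds j).
    assert (Ht : Cmod (RtoC (x * rr j)) < 1).
    { rewrite Cmod_R, Rabs_mult, (Rabs_pos_eq (rr j)) by lra. pose proof (Rabs_pos x). nra. }
    pose proof (Series_correct _ (ex_cpr s _ Hs' Ht)) as HC.
    assert (H1 : is_series (fun n => if Nat.eqb n 0 then 1 else 0) (sm 1 (fun n => if Nat.eqb n 0 then 1 else 0))).
    { apply is_series_finite. intros n Hn. destruct (Nat.eqb_spec n 0); [lia|reflexivity]. }
    pose proof (is_series_minus (K:=R_AbsRing) (V:=R_NormedModule) _ _ _ _ H1 HC) as H2.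
    pose proof (is_series_scal (K:=R_AbsRing) (V:=R_NormedModule) (lam j) _ _ H2) as H3.
    unfold mfun. unfold KC. simpl fst.
    match type of H3 with is_series _ ?L =>
      replace (lam j * (1 - Series (fun n => c s n * pr (RtoC (x * rr j)) n))) with L end.
    + exact H3.
    + change (scal ?a (plus ?b (opp ?c))) with (a * (b - c)). simpl. ring. }
  assert (H6 : forall n, e n = 0).
  { apply ps_unique with (sm NN (fun j => Rabs (lam j) * 2)); auto.
    intro n. unfold e. eapply Rle_trans. apply sm_abs. apply sm_le. intros j Hj.
    rewrite Rabs_mult. apply Rmult_le_compat_l. apply Rabs_pos.
    pose proof (rr_bounds j).
    assert (0 <= rr j ^ n <= 1) by (split; [apply pow_le; lra| apply pow_le_one; lra]).
    pose proof (c_nonneg s Hs' n). pose proof (c_le_a s Hs' n). pose proof (a_le1 s n Hs').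
    eapply Rle_trans. apply Rabs_triang. rewrite Rabs_Ropp.
    assert (Rabs (if Nat.eqb n 0 then 1 else 0) <= 1).
    { destruct (Nat.eqb n 0); [rewrite Rabs_R1|rewrite Rabs_R0]; lra. }
    rewrite Rabs_mult, (Rabs_pos_eq (c s n)), (Rabs_pos_eq (rr j ^ n)) by lra. nra. }
  assert (H7 : forall n, (1 <= n)%nat -> c s n <> 0 -> sm NN (fun j => lam j * ((1/2) ^ n) ^ j) = 0).
  { intros n Hn Hc. specialize (H6 n). unfold e in H6.
    destruct (Nat.eqb_spec n 0); [lia|].
    rewrite (sm_ext _ _ (fun j => (- (c s n * (1/2) ^ n)) * (lam j * ((1/2) ^ n) ^ j))) in H6.
    2:{ intros j Hj. unfold rr. rewrite <- pow_mult, <- pow_mult.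
        replace (S j * n)%nat with (n + n * j)%nat by lia. rewrite pow_add. unfold Rdiv. ring. }
    rewrite sm_scal in H6.
    assert (0 < (1/2) ^ n) by (apply pow_lt; lra).
    apply Rmult_integral in H6. destruct H6 as [H6|H6]; auto.
    exfalso. apply Hc. nra. }
  destruct (small_poly NN lam) as [eps [Heps Hsmall]]. exists j1; auto.
  destruct (pow_lt_1_zero (1/2) ltac:(rewrite Rabs_pos_eq; lra) eps Heps) as [K HK].
  destruct (c_inf s Hs (max K 1)) as [n [Hn Hc]].
  apply (Hsmall ((1/2) ^ n)).
  - split. apply pow_lt; lra. specialize (HK n ltac:(lia)). rewrite Rabs_pos_eq in HK; auto.
    apply pow_le; lra.
  - apply H7; auto. lia.
Qed.

End Fin.

Theorem theorem1p11 :
  emb_dim_is 0 (Some 1%nat) /\ (forall s : R, s < 0 -> emb_dim_is s None).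
Proof.
  split.
  - apply part1.
  - intros s Hs. split.
    + apply has_emb_None; lra.
    + intros d [b [delta [Hb [Hd Hk]]]].
      exact (no_fin s Hs d b delta Hb Hd Hk).
Qed.
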